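(* Let $E$ be a set and regard the power set $\mathscr{P}(E)$ as the Boolean ring $(\mathbf{Z}/2\mathbf{Z})^E$, with addition the symmetric difference, multiplication the intersection, $0=\emptyset$ and $1=-1=E$. For $X\subseteq \mathscr{P}(E)$ set $\mathcal{R}(X)=X\cup\{-1,0,1\}\cup\{x+y : x,y\in X\}\cup\{xy : x,y\in X\}$. Let $(\mathscr{X}_i)_{i\in\mathbf{N}}$ be an increasing sequence of subsets of $\mathscr{P}(E)$ such that $\mathcal{R}(\mathscr{X}_i)\subseteq\mathscr{X}_{i+1}$ for all $i$ and $\bigcup_{i\in\mathbf{N}}\mathscr{X}_i=\mathscr{P}(E)$. Then $\mathscr{P}(E)=\mathscr{X}_i$ for some $i$. *)

(* Defs.v *)
From Stdlib Require Import Bool.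

Definition bset (E : Type) := E -> bool.

Definition bzero {E : Type} : bset E := fun _ => false.
Definition bone {E : Type} : bset E := fun _ => true.
Definition bopp {E : Type} (x : bset E) : bset E := x.         (* -x = x in char 2 *)
Definition bneg_one {E : Type} : bset E := bopp bone.
Definition badd {E : Type} (x y : bset E) : bset E :=
  fun e => xorb (x e) (y e).
Definition bmul {E : Type} (x y : bset E) : bset E :=
  fun e => andb (x e) (y e).

Definition Rclos {E : Type} (X : bset E -> Prop) : bset E -> Prop :=
  fun z => X z \/ z = bneg_one \/ z = bzero \/ z = bone
        \/ (exists x y, X x /\ X y /\ z = badd x y)
        \/ (exists x y, X x /\ X y /\ z = bmul x y).

(* Main.v *)
Require Import Defs.
From Stdlib Require Import Bool Arith Lia Cantor.
From Stdlib Require Import Classical ClassicalEpsilon FunctionalExtensionality.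

Section Proof.
Variable E : Type.
Variable X : nat -> bset E -> Prop.
Hypothesis Hincr : forall i (x : bset E), X i x -> X (S i) x.
Hypothesis HR : forall i (x : bset E), Rclos (X i) x -> X (S i) x.
Hypothesis Hunion : forall x : bset E, exists i, X i x.

Definition sub (y A : bset E) := forall e, y e = true -> A e = true.
Definition goodAt (A : bset E) j := forall y, sub y A -> X j y.
Definition good A := exists j, goodAt A j.
Definition bad A := forall j, exists y, sub y A /\ ~ X j y.
Definition diff (A B : bset E) : bset E := fun e => A e && negb (B e).
Definition bunion (A B : bset E) : bset E := fun e => A e || B e.

Lemma mono : forall i j x, i <= j -> X i x -> X j x.
Proof. intros i j x H; induction H; auto. Qed.

Lemma not_good_bad A : ~ good A -> bad A.
Proof.
  intros H j. apply NNPP; intro H2. apply H. exists j. intros y Hy.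
  apply NNPP; intro H3. apply H2. eauto.
Qed.

Lemma bad_not_good A : bad A -> ~ good A.
Proof. intros H [j Hj]. destruct (H j) as [y [Hy Hn]]. auto. Qed.

Lemma Xadd i x y : X i x -> X i y -> X (S i) (badd x y).
Proof. intros. apply HR. right; right; right; right; left; exists x, y; auto. Qed.
Lemma Xmul i x y : X i x -> X i y -> X (S i) (bmul x y).
Proof. intros. apply HR. right; right; right; right; right; exists x, y; auto. Qed.

Lemma Xadd' i j x y : X i x -> X j y -> X (S (max i j)) (badd x y).
Proof. intros H1 H2. apply Xadd; [apply (mono i)|apply (mono j)]; auto; lia. Qed.
Lemma Xmul' i j x y : X i x -> X j y -> X (S (max i j)) (bmul x y).
Proof. intros H1 H2. apply Xmul; [apply (mono i)|apply (mono j)]; auto; lia. Qed.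

Definition bOf (P : Prop) : bool :=
  if excluded_middle_informative P then true else false.
Lemma bOf_true P : bOf P = true <-> P.
Proof. unfold bOf; destruct excluded_middle_informative; split; congruence || tauto. Qed.

Lemma lemma1 (F : nat -> bset E) :
  (forall n m e, F n e = true -> F m e = true -> n = m) ->
  (forall n, bad (F n)) -> False.
Proof.
  intros Hd Hb.
  assert (Hk : forall n, {k | X k (F n)}).
  { intro n. apply constructive_indefinite_description. apply Hunion. }
  set (k := fun n => proj1_sig (Hk n)).
  assert (Hy : forall n, {y | sub y (F n) /\ ~ X (S (max n (k n))) y}).
  { intro n. apply constructive_indefinite_description. apply Hb. }
  set (y := fun n => proj1_sig (Hy n)).
  set (Y := fun e => bOf (exists n, y n e = true)).
  destruct (Hunion Y) as [K HK].
  assert (Heq : bmul Y (F K) = y K).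
  { apply functional_extensionality; intro e. unfold bmul.
    destruct (proj2_sig (Hy K)) as [Hs _]. fold (y K) in Hs.
    destruct (y K e) eqn:E1.
    - rewrite (Hs e E1). rewrite andb_true_r. apply bOf_true. eauto.
    - destruct (F K e) eqn:E2; [|apply andb_false_r].
      rewrite andb_true_r. destruct (Y e) eqn:E3; auto.
      unfold Y in E3. apply (proj1 (bOf_true _)) in E3. destruct E3 as [n Hn].
      destruct (proj2_sig (Hy n)) as [Hs' _]. fold (y n) in Hs'.
      assert (n = K) by (eapply Hd; eauto). subst. congruence. }
  destruct (proj2_sig (Hy K)) as [_ Hn]. fold (y K) in Hn. apply Hn.
  rewrite <- Heq. apply Xmul'; auto. exact (proj2_sig (Hk K)).
Qed.

Lemma case1 S0 : (forall G, good G -> goodAt G S0) -> bad bone -> False.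
Proof.
  intros HS Hb.
  assert (step : forall R, exists D, bad R -> sub D R /\ bad D /\ bad (diff R D)).
  { intro R. destruct (classic (bad R)) as [HR'|HR']; [|exists R; tauto].
    destruct (Hunion R) as [r Hr].
    destruct (HR' (S (max r S0))) as [D [HD HnD]]. exists D; intros _.
    split; [auto|split].
    - apply not_good_bad; intro Hg. apply HnD. eapply mono; [|apply (HS D Hg D)].
      lia. intros e; auto.
    - apply not_good_bad; intro Hg. apply HnD.
      assert (Heq : D = badd R (diff R D)).
      { apply functional_extensionality; intro e. unfold badd, diff.
        destruct (D e) eqn:E1; [rewrite (HD e E1)|]; destruct (R e); reflexivity. }
      rewrite Heq. apply Xadd'; auto. apply (HS _ Hg). intros e; auto. }
  set (st := fun R => proj1_sig (constructive_indefinite_description _ (step R))).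
  assert (Hst : forall R, bad R -> sub (st R) R /\ bad (st R) /\ bad (diff R (st R))).
  { intro R. exact (proj2_sig (constructive_indefinite_description _ (step R))). }
  set (Rs := fix Rs n := match n with 0 => bone | S n => diff (Rs n) (st (Rs n)) end).
  assert (Hbad : forall n, bad (Rs n)).
  { induction n; simpl; auto. apply Hst; auto. }
  assert (Hdec : forall m n, m <= n -> sub (Rs n) (Rs m)).
  { intros m n H; induction H; intros e He; auto.
    apply IHle. simpl in He. unfold diff in He. apply andb_prop in He; tauto. }
  apply (lemma1 (fun n => st (Rs n))).
  - intros n m e H1 H2.
    assert (Hgen : forall a b, a < b -> st (Rs a) e = true -> st (Rs b) e = true -> False).
    { intros a b Hab Ha Hb'. destruct (Hst _ (Hbad b)) as [Hs _].
      apply Hs in Hb'. apply (Hdec (S a) b Hab) in Hb'. simpl in Hb'.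
      unfold diff in Hb'. rewrite Ha in Hb'. rewrite andb_false_r in Hb'. discriminate. }
    destruct (lt_eq_lt_dec n m) as [[H|H]|H]; auto; exfalso; eauto.
  - intro n. apply Hst; auto.
Qed.

Lemma case2 : (forall S0, exists G, good G /\ ~ goodAt G S0) -> False.
Proof.
  intros HS.
  assert (step : forall n U, exists G, good U ->
     good G /\ exists u, goodAt U u /\ ~ goodAt G (S (max n u))).
  { intros n U. destruct (classic (good U)) as [[u Hu]|Hn]; [|exists U; tauto].
    destruct (HS (S (max n u))) as [G [HG1 HG2]]. exists G; intros _.
    split; auto. exists u; auto. }
  set (st := fun n U => proj1_sig (constructive_indefinite_description _ (step n U))).
  assert (Hst : forall n U, good U -> good (st n U) /\
     exists u, goodAt U u /\ ~ goodAt (st n U) (S (max n u))).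
  { intros n U. exact (proj2_sig (constructive_indefinite_description _ (step n U))). }
  set (Us := fix Us n := match n with 0 => bzero | S n => bunion (Us n) (st n (Us n)) end).
  assert (Hgood : forall n, good (Us n)).
  { induction n; simpl.
    - exists 1. intros y Hy.
      assert (y = bzero) as ->.
      { apply functional_extensionality; intro e. destruct (y e) eqn:E1; [apply Hy in E1; discriminate|reflexivity]. }
      apply HR. right; right; left; auto.
    - destruct IHn as [u Hu]. destruct (Hst n (Us n) (ex_intro _ u Hu)) as [[g Hg] _].
      exists (S (max g u)). intros y Hy.
      assert (Heq : y = badd (bmul y (st n (Us n))) (diff y (st n (Us n)))).
      { apply functional_extensionality; intro e. unfold badd, bmul, diff.
        destruct (y e), (st n (Us n) e); reflexivity. }
      rewrite Heq. apply Xadd'.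
      + apply Hg. intros e He. unfold bmul in He. apply andb_prop in He; tauto.
      + apply Hu. intros e He. unfold diff in He. apply andb_prop in He.
        destruct He as [H1 H2]. apply Hy in H1. unfold bunion in H1.
        destruct (Us n e); auto. destruct (st n (Us n) e); discriminate. }
  set (D := fun n => diff (st n (Us n)) (Us n)).
  assert (Hinc : forall m n, m <= n -> sub (Us m) (Us n)).
  { intros m n H; induction H; intros e He; auto. simpl. unfold bunion.
    rewrite (IHle e He). auto. }
  assert (Hdisj : forall n m e, D n e = true -> D m e = true -> n = m).
  { assert (Hgen : forall a b e, a < b -> D a e = true -> D b e = true -> False).
    { intros a b e Hab Ha Hb. unfold D, diff in Ha, Hb.
      apply andb_prop in Ha; apply andb_prop in Hb.
      assert (Us (S a) e = true).
      { simpl. unfold bunion. destruct Ha as [-> _]. apply orb_true_r. }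
      apply (Hinc _ _ Hab) in H. destruct Hb as [_ Hb]. rewrite H in Hb. discriminate. }
    intros n m e H1 H2. destruct (lt_eq_lt_dec n m) as [[H|H]|H]; auto; exfalso; eauto. }
  assert (Hw : forall n, exists w, sub w (D n) /\ ~ X n w).
  { intro n. destruct (Hst n (Us n) (Hgood n)) as [_ [u [Hu Hn]]].
    apply NNPP; intro Hc. apply Hn. intros z Hz.
    assert (Hz2 : X n (diff z (Us n))).
    { apply NNPP; intro H. apply Hc. exists (diff z (Us n)). split; auto.
      intros e He. unfold D in *; unfold diff in *; cbv beta in *. apply andb_prop in He. destruct He as [H1 H2].
      rewrite (Hz e H1), H2. reflexivity. }
    assert (Heq : z = badd (diff z (Us n)) (bmul z (Us n))).
    { apply functional_extensionality; intro e. unfold badd, bmul, diff.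
      destruct (z e), (Us n e); reflexivity. }
    rewrite Heq. apply Xadd'; auto. apply Hu. intros e He. unfold bmul in He.
    apply andb_prop in He; tauto. }
  apply (lemma1 (fun j e => bOf (exists k, D (to_nat (j, k)) e = true))).
  - intros n m e H1 H2. apply (proj1 (bOf_true _)) in H1. apply (proj1 (bOf_true _)) in H2.
    destruct H1 as [k1 H1], H2 as [k2 H2].
    pose proof (Hdisj _ _ _ H1 H2) as H.
    apply (f_equal of_nat) in H. rewrite !cancel_of_to in H. congruence.
  - intros j J. destruct (Hw (to_nat (j, J))) as [w [Hw1 Hw2]].
    exists w. split.
    + intros e He. apply bOf_true. exists J. auto.
    + intro H. apply Hw2. eapply mono; [|exact H].
      pose proof (to_nat_non_decreasing j J). lia.
Qed.

Lemma main : exists i, forall x : bset E, X i x.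
Proof.
  destruct (classic (good bone)) as [[j Hj]|Hn].
  - exists j. intro x. apply Hj. intros e _. reflexivity.
  - apply not_good_bad in Hn. exfalso.
    destruct (classic (exists S0, forall G, good G -> goodAt G S0)) as [[S0 H]|H].
    + eapply case1; eauto.
    + apply case2. intro S0. apply NNPP; intro H2. apply H. exists S0.
      intros G HG. apply NNPP; intro H3. apply H2. eauto.
Qed.
End Proof.

Theorem mainTheorem5 (E : Type) (X : nat -> bset E -> Prop)
  (Hincr : forall i (x : bset E), X i x -> X (S i) x)
  (HR : forall i (x : bset E), Rclos (X i) x -> X (S i) x)
  (Hunion : forall x : bset E, exists i, X i x) :
  exists i, forall x : bset E, X i x.
Proof. exact (main E X Hincr HR Hunion). Qed.
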